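(* Let $\phi_1,\phi_2:\mathbb R^n\to\mathbb R$ both satisfy the standing assumption, let $f_1,f_2:\mathbb R^n\to\overline{\mathbb R}$ be proper, lsc, convex, with $f_i$ a-smooth relative to $\phi_i$ ($i=1,2$), and let $a_1,a_2>0$. Assume that one of $f_1,f_2$ is bounded below and the other is coercive, or that one of them is super-coercive. Then $(a_1\star f_1)\,\square\,(a_2\star f_2)$ is a-smooth relative to the reference function $\phi:=(a_1\star\phi_1)\,\square\,(a_2\star\phi_2)$.
   Context: Standing assumption on a reference function $\psi:\mathbb R^n\to\mathbb R$: convex, finite-valued, differentiable and strictly convex (Legendre with full domain), super-coercive ($\psi(x)/\|x\|\to\infty$). Epi-scaling: $(a\star f)(x)=af(x/a)$. Infimal convolution: $(g\,\square\,h)(x)=\inf_y g(y)+h(x-y)$. Coercive: $f(x)\to\infty$ as $\|x\|\to\infty$. A proper lsc $h$ is a-weakly convex relative to $\psi$ if for every $(\bar x,\bar v)\in\operatorname{graph}\partial h$ (limiting subdifferential): $h(x)\ge h(\bar x)-\psi(x-\bar x+\nabla\psi^*(-\bar v))+\psi(\nabla\psi^*(-\bar v))$ for all $x$; $f$ is a-smooth relative to $\psi$ if $f$ is real-valued, continuously differentiable, and both $f$ and $-f$ are a-weakly convex relative to $\psi$. *)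

(* Defs.v *)
From HB Require Import structures.
From mathcomp Require Import all_boot all_order all_algebra.
From mathcomp Require Import all_classical all_reals.
From mathcomp Require Import ereal.
Set Implicit Arguments. Unset Strict Implicit. Unset Printing Implicit Defensive.
Import Order.TTheory GRing.Theory Num.Theory.
Local Open Scope classical_set_scope.
Local Open Scope ring_scope.

Section Defs.
Variables (R : realType) (n : nat).
Notation vec := 'rV[R]_n.

Definition dotp (x y : vec) : R := \sum_(i < n) x ord0 i * y ord0 i.
Definition enorm (x : vec) : R := Num.sqrt (dotp x x).

Definition has_gradient (g : vec -> R) (x gx : vec) : Prop :=
  forall eps : R, 0 < eps -> exists2 del : R, 0 < del & forall y : vec,
    enorm (y - x) < del ->
    `| g y - g x - dotp gx (y - x) | <= eps * enorm (y - x).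

Definition differentiable_everywhere (g : vec -> R) : Prop :=
  forall x, exists gx, has_gradient g x gx.

Definition vcontinuous (G : vec -> vec) : Prop :=
  forall x (eps : R), 0 < eps -> exists2 del : R, 0 < del & forall y,
    enorm (y - x) < del -> enorm (G y - G x) < eps.

Definition C1 (g : vec -> R) : Prop :=
  exists G : vec -> vec, (forall x, has_gradient g x (G x)) /\ vcontinuous G.

(* Convex conjugate (real-valued; finite under the standing assumption) *)
Definition conjugate (psi : vec -> R) (y : vec) : R :=
  fine (ereal_sup [set ((dotp x y - psi x)%:E) | x in setT]).

Definition standing_assumption (psi : vec -> R) : Prop :=
  [/\ (forall x y (t : R), 0 <= t <= 1 ->
         psi (t *: x + (1 - t) *: y) <= t * psi x + (1 - t) * psi y),
      differentiable_everywhere psi,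
      (forall x y (t : R), x != y -> 0 < t < 1 ->
         psi (t *: x + (1 - t) *: y) < t * psi x + (1 - t) * psi y)
    & (forall M : R, exists r : R, forall x, r <= enorm x -> M * enorm x <= psi x)].

Local Open Scope ereal_scope.

Definition proper_fun (h : vec -> \bar R) : Prop :=
  (forall x, h x != -oo) /\ (exists x, h x \is a fin_num).

Definition lsc (h : vec -> \bar R) : Prop :=
  forall x (t : R), t%:E < h x -> exists2 del : R, (0 < del)%R &
    forall y, (enorm (y - x) < del)%R -> t%:E < h y.

Definition convex_fun (h : vec -> \bar R) : Prop :=
  forall (x y : vec) (t : R), (0 < t < 1)%R ->
    h (t *: x + (1 - t) *: y)%R <= t%:E * h x + (1 - t)%:E * h y.

Definition bounded_below (h : vec -> \bar R) : Prop :=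
  exists m : R, forall x, m%:E <= h x.

Definition coercive (h : vec -> \bar R) : Prop :=
  forall M : R, exists r : R, forall x, (r <= enorm x)%R -> M%:E <= h x.

Definition supercoercive (h : vec -> \bar R) : Prop :=
  forall M : R, exists r : R, forall x, (r <= enorm x)%R -> (M * enorm x)%:E <= h x.

Definition frechet_subgrad (h : vec -> \bar R) (x v : vec) : Prop :=
  h x \is a fin_num /\
  forall eps : R, (0 < eps)%R -> exists2 del : R, (0 < del)%R & forall y,
    (enorm (y - x) < del)%R ->
    h x + (dotp v (y - x)%R - eps * enorm (y - x))%:E <= h y.

Definition limiting_subgrad (h : vec -> \bar R) (x v : vec) : Prop :=
  h x \is a fin_num /\
  exists (xs vs : nat -> vec),
    (forall k, frechet_subgrad h (xs k) (vs k)) /\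
    (forall eps : R, (0 < eps)%R -> exists N : nat, forall k, (N <= k)%N ->
       [/\ (enorm (xs k - x) < eps)%R, (enorm (vs k - v) < eps)%R,
           h (xs k) \is a fin_num & (`| fine (h (xs k)) - fine (h x) | < eps)%R]).

Definition weakly_convex_rel (psi : vec -> R) (h : vec -> \bar R) : Prop :=
  proper_fun h /\ lsc h /\
  forall xb vb, limiting_subgrad h xb vb ->
    forall w, has_gradient (conjugate psi) (- vb) w ->
      forall x, h xb + (- psi (x - xb + w)%R + psi w)%:E <= h x.

Definition smooth_rel (psi : vec -> R) (f : vec -> \bar R) : Prop :=
  [/\ (forall x, f x \is a fin_num), C1 (fun x => fine (f x)),
      weakly_convex_rel psi f & weakly_convex_rel psi (fun x => - f x)].

Definition escale (a : R) (f : vec -> \bar R) (x : vec) : \bar R :=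
  a%:E * f (a^-1 *: x)%R.

Definition infconv (g h : vec -> \bar R) (x : vec) : \bar R :=
  ereal_inf [set g y + h (x - y)%R | y in setT].

Definition ref_infconv (a1 a2 : R) (phi1 phi2 : vec -> R) (x : vec) : R :=
  fine (infconv (escale a1 (fun z => (phi1 z)%:E))
                (escale a2 (fun z => (phi2 z)%:E)) x).

End Defs.

(* Main.v *)
Require Import Defs.
From HB Require Import structures.
From mathcomp Require Import all_boot all_order all_algebra.
From mathcomp Require Import all_classical all_reals.
From mathcomp Require Import ereal.
From mathcomp Require Import lra ring.
From mathcomp Require topology normedtype derive matrix_normedtype.
Import Order.TTheory GRing.Theory Num.Theory.
Local Open Scope ring_scope.

Module M1.
Import Order.TTheory GRing.Theory Num.Theory.
Set Implicit Arguments. Unset Strict Implicit. Unset Printing Implicit Defensive.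
Local Open Scope ring_scope.

Section Vec.
Variables (R : realType) (n : nat).
Notation vec := 'rV[R]_n.
Implicit Types (x y z : vec).

Lemma dotpC x y : dotp x y = dotp y x.
Proof. by apply: eq_bigr => i _; rewrite mulrC. Qed.
Lemma dotpDl x y z : dotp (x + y) z = dotp x z + dotp y z.
Proof. by rewrite /dotp -big_split; apply: eq_bigr => i _; rewrite mxE mulrDl. Qed.
Lemma dotpDr x y z : dotp z (x + y) = dotp z x + dotp z y.
Proof. by rewrite dotpC dotpDl !(dotpC z). Qed.
Lemma dotpZl a x y : dotp (a *: x) y = a * dotp x y.
Proof. by rewrite /dotp mulr_sumr; apply: eq_bigr => i _; rewrite mxE mulrA. Qed.
Lemma dotpZr a x y : dotp y (a *: x) = a * dotp y x.
Proof. by rewrite dotpC dotpZl dotpC. Qed.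
Lemma dotpNl x y : dotp (- x) y = - dotp x y.
Proof. by rewrite -scaleN1r dotpZl mulN1r. Qed.
Lemma dotpNr x y : dotp y (- x) = - dotp y x.
Proof. by rewrite -scaleN1r dotpZr mulN1r. Qed.
Lemma dotpBl x y z : dotp (x - y) z = dotp x z - dotp y z.
Proof. by rewrite dotpDl dotpNl. Qed.
Lemma dotpBr x y z : dotp z (x - y) = dotp z x - dotp z y.
Proof. by rewrite dotpDr dotpNr. Qed.
Lemma dotp0l x : dotp 0 x = 0.
Proof. by rewrite -(scale0r 0) dotpZl mul0r. Qed.
Lemma dotp0r x : dotp x 0 = 0.
Proof. by rewrite dotpC dotp0l. Qed.
Lemma dotpp_ge0 x : 0 <= dotp x x.
Proof. by apply: sumr_ge0 => i _; rewrite -expr2 sqr_ge0. Qed.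
Lemma dotpp_eq0 x : dotp x x = 0 -> x = 0.
Proof.
move=> /eqP; rewrite psumr_eq0 => [/allP H|i _]; last by rewrite -expr2 sqr_ge0.
apply/rowP => i; rewrite mxE; have := H i; rewrite mem_index_enum => /(_ isT).
by rewrite mulf_eq0 orbb => /eqP.
Qed.
Lemma enorm_ge0 x : 0 <= enorm x.
Proof. exact: sqrtr_ge0. Qed.
Lemma enorm_sq x : enorm x ^+ 2 = dotp x x.
Proof. by rewrite sqr_sqrtr // dotpp_ge0. Qed.
Lemma enorm_eq0 x : enorm x = 0 -> x = 0.
Proof. by move=> h; apply: dotpp_eq0; rewrite -enorm_sq h expr0n. Qed.
Lemma enorm0 : enorm (0 : vec) = 0.
Proof. by rewrite /enorm dotp0l sqrtr0. Qed.
Lemma enormZ a x : enorm (a *: x) = `|a| * enorm x.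
Proof.
by rewrite /enorm dotpZl dotpZr mulrA -expr2 sqrtrM ?sqr_ge0 // sqrtr_sqr.
Qed.
Lemma enormN x : enorm (- x) = enorm x.
Proof. by rewrite -scaleN1r enormZ normrN normr1 mul1r. Qed.
Lemma enormB x y : enorm (x - y) = enorm (y - x).
Proof. by rewrite -enormN opprB. Qed.

Lemma CS x y : `|dotp x y| <= enorm x * enorm y.
Proof.
have key : dotp x y ^+ 2 <= dotp x x * dotp y y.
  have h t : 0 <= t ^+ 2 * dotp x x + 2 * t * dotp x y + dotp y y.
    have := dotpp_ge0 (t *: x + y).
    rewrite !dotpDl !dotpDr !dotpZl !dotpZr (dotpC y x); lra.
  have [a0|an0] := eqVneq (dotp x x) 0.
    have /dotpp_eq0 -> : dotp x x = 0 by [].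
    by rewrite !dotp0l expr0n mul0r.
  have apos : 0 < dotp x x by rewrite lt_neqAle eq_sym an0 dotpp_ge0.
  have := h (- dotp x y / dotp x x).
  set a := dotp x x; set b := dotp x y; set c := dotp y y => H.
  have e : (- b / a) ^+ 2 * a + 2 * (- b / a) * b + c = c - b ^+ 2 / a.
    by field; rewrite /a an0.
  rewrite e subr_ge0 ler_pdivrMr // in H.
  by rewrite mulrC.
rewrite -(ler_pXn2r (_ : 0 < 2)%N) ?nnegrE ?mulr_ge0 ?enorm_ge0 //.
by rewrite real_normK ?num_real // exprMn !enorm_sq.
Qed.

Lemma enormD x y : enorm (x + y) <= enorm x + enorm y.
Proof.
rewrite -(ler_pXn2r (_ : 0 < 2)%N) ?nnegrE ?addr_ge0 ?enorm_ge0 //.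
rewrite enorm_sq !dotpDl !dotpDr (dotpC y x) sqrrD !enorm_sq.
have := CS x y; have := ler_norm (dotp x y); lra.
Qed.

Lemma enorm_coord x i : `|x ord0 i| <= enorm x.
Proof.
rewrite -sqrtr_sqr ler_sqrt ?dotpp_ge0 //.
rewrite /dotp (bigD1 i) //= -expr2 lerDl; apply: sumr_ge0 => j _.
by rewrite -expr2 sqr_ge0.
Qed.

End Vec.

End M1.
Import M1.

Module M2.
Import topology normedtype derive matrix_normedtype.
Import Order.TTheory GRing.Theory Num.Theory Num.Def numFieldTopology.Exports numFieldNormedType.Exports.
Set Implicit Arguments. Unset Strict Implicit. Unset Printing Implicit Defensive.
Local Open Scope ring_scope.
Local Open Scope classical_set_scope.

Section Topo.
Variables (R : realType) (n : nat).
Notation vec := 'rV[R]_n.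
Implicit Types (x y z : vec).

Definition rcont (g : vec -> R) := forall x (eps : R), 0 < eps ->
  exists2 del : R, 0 < del & forall y, enorm (y - x) < del -> `|g y - g x| < eps.

Lemma mx_le_enorm (v : vec) : `|v| <= enorm v.
Proof.
rewrite /normr /= mx_normrE; apply: bigmax_le; first exact: enorm_ge0.
by case=> i j _ /=; rewrite (ord1 i); exact: enorm_coord.
Qed.

Lemma coord_le_mx (v : vec) i : `|v ord0 i| <= `|v|.
Proof. by rewrite [X in _ <= X]/normr /= mx_normrE; exact: (le_bigmax _ (fun ij => `|v ij.1 ij.2|) (ord0, i)). Qed.

Lemma enorm_le_mx (v : vec) : enorm v <= n%:R * `|v|.
Proof.
rewrite -(ler_pXn2r (_ : 0 < 2)%N) ?nnegrE ?mulr_ge0 ?enorm_ge0 //.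
rewrite enorm_sq /dotp.
apply: (le_trans (y := \sum_(i < n) `|v|^+2)).
  apply: ler_sum => i _; rewrite -expr2 -real_normK ?num_real //.
  by rewrite lerXn2r ?nnegrE ?normr_ge0 // coord_le_mx.
rewrite sumr_const card_ord exprMn -[X in X <= _]mulr_natl; apply: ler_wpM2r; first exact: sqr_ge0.
rewrite -natrX ler_nat; case: n => // k; rewrite expnS leq_pmulr //.
Qed.

Lemma enorm_lip (a b : vec) : `|enorm a - enorm b| <= enorm (a - b).
Proof.
rewrite ler_norml; apply/andP; split.
  have := enormD (b - a) a; rewrite subrK enormB; lra.
have := enormD (a - b) b; rewrite subrK; lra.
Qed.

Lemma rcont_cont g : rcont g -> continuous g.
Proof.
move=> hg x A /= /nbhs_ballP [e e0 heA].
have [d d0 hd] := hg x e e0.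
apply/nbhs_ballP; exists (d / (n%:R + 1)) => /=.
  by rewrite divr_gt0 // ltr_wpDl.
move=> y; rewrite -ball_normE /= => hxy.
apply: heA; rewrite -ball_normE /=.
rewrite distrC; apply: hd.
apply: (le_lt_trans (enorm_le_mx _)); rewrite distrC in hxy.
rewrite ltr_pdivlMr ?ltr_wpDl // in hxy.
apply: le_lt_trans hxy; rewrite mulrC; apply: ler_wpM2l; first exact: normr_ge0.
by rewrite lerDl.
Qed.

Lemma enorm_rcont c : rcont (fun x => enorm (x - c)).
Proof.
move=> x e e0; exists e => // y hy; apply: le_lt_trans (enorm_lip _ _) _.
by rewrite opprB addrA subrK.
Qed.

Lemma closed_ballE c r : closed [set x : vec | enorm (x - c) <= r].
Proof.
apply: (preimage_closed (f := fun x : vec => enorm (x - c)) (D := [set t | t <= r])).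
  by move=> x _; apply: rcont_cont; exact: enorm_rcont.
exact: closed_le.
Qed.

Lemma closed_sphereE c r : closed [set x : vec | enorm (x - c) = r].
Proof.
apply: (preimage_closed (f := fun x : vec => enorm (x - c)) (D := [set t | t = r])).
  by move=> x _; apply: rcont_cont; exact: enorm_rcont.
exact: closed_eq.
Qed.

Lemma min_on (K : set vec) g : K !=set0 -> closed K ->
  (exists M, forall x, K x -> enorm x <= M) -> rcont g ->
  exists c, K c /\ forall t, K t -> g c <= g t.
Proof.
move=> K0 Kc [M hM] hg.
have cK : compact K.
  apply: bounded_closed_compact => //.
  exists M; split; first exact: num_real.
  move=> N hN x Kx; apply: ltW; apply: le_lt_trans hN.
  exact: le_trans (mx_le_enorm x) (hM x Kx).
have [c cK' hc] := compact_EVT_min K0 cK (continuous_subspaceT (A := K) (rcont_cont hg)).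
exists c; split; first by rewrite inE in cK'.
by move=> t Kt; apply: hc; rewrite inE.
Qed.

Lemma attain_coercive g : rcont g ->
  (exists r, forall y, r <= enorm y -> g 0 <= g y) ->
  exists c, forall y, g c <= g y.
Proof.
move=> hg [r hr].
have [|//|c [Kc hc]] := min_on (K := [set x | enorm (x - 0) <= `|r|]) _
  (closed_ballE (c:=0) (r:=`|r|)) _ hg.
- by exists 0; rewrite /= subr0 enorm0.
- by exists `|r| => x; rewrite /= subr0.
- exists c => y; have [hy|hy] := leP (enorm (y - 0)) `|r|.
    exact: hc.
  apply: le_trans (hc 0 _) (hr y _); first by rewrite /= subr0 enorm0.
  by rewrite subr0 in hy; apply: le_trans (ltW hy); exact: ler_norm.
Qed.

End Topo.

End M2.
Import M2.

Module M3.
Import Order.TTheory GRing.Theory Num.Theory Num.Def.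
Set Implicit Arguments. Unset Strict Implicit. Unset Printing Implicit Defensive.
Local Open Scope ring_scope.

Section Grad.
Variables (R : realType) (n : nat).
Notation vec := 'rV[R]_n.
Implicit Types (x y z : vec) (g : vec -> R).

Lemma min_le_l (a b : R) : Num.min a b <= a. Proof. by rewrite ge_min lexx. Qed.
Lemma min_le_r (a b : R) : Num.min a b <= b. Proof. by rewrite ge_min lexx orbT. Qed.

Lemma divmul2 (m N : R) : 0 < N -> m / (2 * N) * N = m / 2.
Proof. by move=> N0; field; exact: lt0r_neq0. Qed.

Definition convexR g := forall x y (t : R), 0 <= t <= 1 ->
  g (t *: x + (1 - t) *: y) <= t * g x + (1 - t) * g y.

Lemma grad_lip g x G : has_gradient g x G ->
  exists2 d : R, 0 < d & forall y, enorm (y - x) < d ->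
    `|g y - g x| <= (enorm G + 1) * enorm (y - x).
Proof.
move=> hg; have [d d0 hd] := hg 1 ltr01; exists d => // y hy.
have := hd y hy; have := CS G (y - x).
set a := g y - g x; set b := dotp G (y - x) => h1 h2.
have : `|a| <= `|a - b| + `|b|.
  by have := ler_normD (a - b) b; rewrite subrK.
rewrite mulrDl mul1r; lra.
Qed.

Lemma grad_rcont g (G : vec -> vec) : (forall x, has_gradient g x (G x)) -> rcont g.
Proof.
move=> hg x e e0; have [d d0 hd] := grad_lip (hg x).
set K := enorm (G x) + 1.
have K0 : 0 < K by rewrite /K ltr_wpDl ?enorm_ge0.
exists (Num.min d (e / K)); first by rewrite lt_min d0 divr_gt0.
move=> y; rewrite lt_min => /andP[hy1 hy2].
apply: le_lt_trans (hd y hy1) _.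
by rewrite mulrC -ltr_pdivlMr.
Qed.

Lemma grad_unique g x G (v : vec) : has_gradient g x G ->
  (forall eps : R, 0 < eps -> exists2 del : R, 0 < del & forall y,
     enorm (y - x) < del -> g x + dotp v (y - x) - eps * enorm (y - x) <= g y) ->
  v = G.
Proof.
move=> hg hl; apply/eqP; rewrite -subr_eq0; apply/negPn/negP => hne.
set u := v - G.
have un : 0 < enorm u.
  rewrite lt_neqAle enorm_ge0 andbT; apply/eqP => h.
  by move/eqP: hne; apply; apply: enorm_eq0.
set e := enorm u / 4.
have e0 : 0 < e by rewrite divr_gt0.
have [d1 d10 h1] := hg e e0; have [d2 d20 h2] := hl e e0.
set m := Num.min d1 d2; have m0 : 0 < m by rewrite lt_min d10 d20.
set t := m / (2 * enorm u); have t0 : 0 < t by rewrite divr_gt0 // mulr_gt0.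
set y := x + t *: u.
have yx : y - x = t *: u by rewrite /y addrAC subrr add0r.
have ey : enorm (y - x) = m / 2.
  rewrite yx enormZ gtr0_norm // /t.
  exact: divmul2.
have hy : enorm (y - x) < m by rewrite ey ltr_pdivrMr // ltr_pMr // ltr1n.
have := h1 y (lt_le_trans hy (min_le_l _ _)).
have := h2 y (lt_le_trans hy (min_le_r _ _)).
rewrite yx.
rewrite !dotpZr !enormZ gtr0_norm //.
have : dotp v u - dotp G u = enorm u ^+ 2.
  by rewrite -dotpBl enorm_sq.
set A := dotp v u; set B := dotp G u; set N := enorm u.
rewrite ler_norml => hAB h3 /andP[h4 h5].
have : t * N ^+ 2 <= 2 * (e * (t * N)) by nra.
have e4 : N = 4 * e by rewrite /e /N mulrC divfK // pnatr_eq0.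
rewrite e4 => h6.
have : 0 < t * (e * e) by rewrite mulr_gt0 // mulr_gt0.
nra.
Qed.

Lemma grad_ineq g x G : convexR g -> has_gradient g x G ->
  forall y, g x + dotp G (y - x) <= g y.
Proof.
move=> hc hg y; rewrite leNgt; apply/negP => hlt.
set d := y - x; set gap := g x + dotp G d - g y.
have gap0 : 0 < gap by rewrite /gap subr_gt0.
set N := enorm d; have N0 : 0 <= N := enorm_ge0 _.
set e := gap / (N + 1); have e0 : 0 < e by rewrite divr_gt0 // ltr_wpDl.
have [del del0 hd] := hg e e0.
set t := del / (2 * (N + del + 1)).
have den0 : 0 < 2 * (N + del + 1) by rewrite mulr_gt0 // ltr_wpDl // addr_ge0 // ltW.
have t0 : 0 < t by rewrite divr_gt0.
have t1 : t < 1.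
  by rewrite /t ltr_pdivrMr // mul1r; lra.
set z := t *: y + (1 - t) *: x.
have zx : z - x = t *: d.
  by apply/rowP => i; rewrite /z /d !mxE; ring.
have hz : enorm (z - x) < del.
  rewrite zx enormZ gtr0_norm // /t.
  rewrite mulrC mulrA ltr_pdivrMr //.
  have : N * del < del * (2 * (N + del + 1)) by nra.
  by rewrite mulrC.
have := hd z hz; rewrite zx dotpZr enormZ (gtr0_norm t0) -/N => hg1.
have := hc y x t; rewrite ltW // (ltW t1) => /(_ isT) hc1.
rewrite -/z in hc1.
have h2 : t * dotp G d - e * (t * N) <= g z - g x.
  by move: hg1; rewrite ler_norml => /andP[hh _]; lra.
have h3 : g z - g x <= t * (g y - g x) by lra.
have h4 : t * (dotp G d - e * N) <= t * (g y - g x) by lra.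
rewrite ler_pM2l // in h4.
have : gap <= e * N by rewrite /gap; lra.
rewrite /e mulrC mulrA ler_pdivlMr ?ltr_wpDl //.
have : 0 < gap * (N + 1) - N * gap by nra.
lra.
Qed.

Lemma grad_add g1 g2 x G1 G2 : has_gradient g1 x G1 -> has_gradient g2 x G2 ->
  has_gradient (fun y => g1 y + g2 y) x (G1 + G2).
Proof.
move=> h1 h2 e e0.
have [d1 d10 hd1] := h1 (e / 2) (divr_gt0 e0 (ltr0n _ 2)).
have [d2 d20 hd2] := h2 (e / 2) (divr_gt0 e0 (ltr0n _ 2)).
exists (Num.min d1 d2); first by rewrite lt_min d10 d20.
move=> y; rewrite lt_min => /andP[hy1 hy2].
have := hd1 y hy1; have := hd2 y hy2; rewrite dotpDl.
set a := g1 y - g1 x - dotp G1 (y - x); set b := g2 y - g2 x - dotp G2 (y - x).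
have -> : g1 y + g2 y - (g1 x + g2 x) - (dotp G1 (y - x) + dotp G2 (y - x)) = a + b.
  by rewrite /a /b; ring.
move=> hb ha; apply: le_trans (ler_normD _ _) _; lra.
Qed.

Lemma grad_opp g x G : has_gradient g x G -> has_gradient (fun y => - g y) x (- G).
Proof.
move=> h e e0; have [d d0 hd] := h e e0; exists d => // y hy.
rewrite dotpNl.
have -> : - g y - - g x - - dotp G (y - x) = - (g y - g x - dotp G (y - x)) by ring.
by rewrite normrN; exact: hd.
Qed.

Lemma grad_comp_sub g c x G : has_gradient g (c - x) G ->
  has_gradient (fun y => g (c - y)) x (- G).
Proof.
move=> h e e0; have [d d0 hd] := h e e0; exists d => // y hy.
have e1 : c - y - (c - x) = - (y - x) by apply/rowP => i; rewrite !mxE; ring.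
have := hd (c - y); rewrite e1 enormN dotpNr dotpNl => /(_ hy).
by rewrite opprK.
Qed.

Lemma grad_shift g c x G : has_gradient g (x + c) G ->
  has_gradient (fun y => g (y + c)) x G.
Proof.
move=> h e e0; have [d d0 hd] := h e e0; exists d => // y hy.
have e1 : y + c - (x + c) = y - x by apply/rowP => i; rewrite !mxE; ring.
by have := hd (y + c); rewrite e1 => /(_ hy).
Qed.

Lemma grad_scale g a x G : 0 < a -> has_gradient g (a^-1 *: x) G ->
  has_gradient (fun y => a * g (a^-1 *: y)) x G.
Proof.
move=> a0 h e e0; have [d d0 hd] := h e e0; exists (a * d); first by rewrite mulr_gt0.
have ai0 : 0 < a^-1 by rewrite invr_gt0.
move=> y hy.
have e1 : a^-1 *: y - a^-1 *: x = a^-1 *: (y - x) by rewrite scalerBr.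
have hy' : enorm (a^-1 *: y - a^-1 *: x) < d.
  by rewrite e1 enormZ gtr0_norm ?invr_gt0 // mulrC ltr_pdivrMr // mulrC.
have := hd _ hy'; rewrite e1 dotpZr enormZ (gtr0_norm ai0) => H.
have -> : a * g (a^-1 *: y) - a * g (a^-1 *: x) - dotp G (y - x) =
  a * (g (a^-1 *: y) - g (a^-1 *: x) - a^-1 * dotp G (y - x)).
  by field; rewrite gt_eqF.
rewrite normrM gtr0_norm //.
have -> : e * enorm (y - x) = a * (e * (a^-1 * enorm (y - x))).
  by field; rewrite gt_eqF.
by rewrite ler_pM2l.
Qed.

Lemma convexR_scale g a : 0 < a -> convexR g -> convexR (fun y => a * g (a^-1 *: y)).
Proof.
move=> a0 hc x y t ht.
rewrite scalerDr !scalerA (mulrC a^-1) (mulrC a^-1) -!scalerA.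
have := hc (a^-1 *: x) (a^-1 *: y) t ht; nra.
Qed.

End Grad.

End M3.
Import M3.

Module M4.
Import Order.TTheory GRing.Theory Num.Theory Num.Def.
Set Implicit Arguments. Unset Strict Implicit. Unset Printing Implicit Defensive.
Local Open Scope classical_set_scope.
Local Open Scope ring_scope.

Section Conj.
Variables (R : realType) (n : nat).
Notation vec := 'rV[R]_n.
Implicit Types (x y z s : vec) (g : vec -> R).

Lemma supercoercive_lb g G0 : convexR g -> has_gradient g 0 G0 ->
  (forall M : R, exists r : R, forall x, r <= enorm x -> M * enorm x <= g x) ->
  forall M : R, exists c : R, forall x, M * enorm x - c <= g x.
Proof.
move=> hc hg hs M; have [r hr] := hs M.
exists (`|M| * `|r| + enorm G0 * `|r| + `|g 0|) => x.
have hx0 : 0 <= enorm x := enorm_ge0 x.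
have hG0 : 0 <= enorm G0 := enorm_ge0 G0.
have hM : M * enorm x <= `|M| * enorm x by rewrite ler_wpM2r // ler_norm.
have hr0 : r <= `|r| := ler_norm r.
have hg0 : - `|g 0| <= g 0 by rewrite lerNl -normrN ler_norm.
have hg0' : 0 <= `|g 0| := normr_ge0 _.
have [hx|hx] := leP r (enorm x).
  have := hr x hx.
  have : 0 <= `|M| * `|r| by rewrite mulr_ge0.
  have : 0 <= enorm G0 * `|r| by rewrite mulr_ge0.
  lra.
have := grad_ineq hc hg x; rewrite subr0.
have := CS G0 x; rewrite ler_norml => /andP[h1 _].
have : `|M| * enorm x <= `|M| * `|r|.
  by rewrite ler_wpM2l // ltW // (lt_le_trans hx).
have : enorm G0 * enorm x <= enorm G0 * `|r|.
  by rewrite ler_wpM2l // ltW // (lt_le_trans hx).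
lra.
Qed.

Section ConjVal.
Variable psi : vec -> R.
Variable s : vec.
Hypothesis hb : exists C : R, forall x, dotp x s - psi x <= C.

Let S := [set ((dotp x s - psi x)%:E) | x in setT].

Lemma conj_fin : ereal_sup S = (conjugate psi s)%:E.
Proof.
have [C hC] := hb.
have h1 : (ereal_sup S <= C%:E)%E.
  by apply: ge_ereal_sup => _ [x _ <-]; rewrite lee_fin.
have h2 : ((dotp 0 s - psi 0)%:E <= ereal_sup S)%E.
  by apply: ereal_sup_ubound; exists 0.
rewrite /conjugate -/S fineK //.
apply/fin_numPlt; apply/andP; split.
  by apply: lt_le_trans h2; exact: ltNyr.
by apply: le_lt_trans h1 _; exact: ltry.
Qed.

Lemma conj_ge x : dotp x s - psi x <= conjugate psi s.
Proof.
rewrite -lee_fin -conj_fin; apply: ereal_sup_ubound; by exists x.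
Qed.

Lemma conj_le (c : R) : (forall x, dotp x s - psi x <= c) -> conjugate psi s <= c.
Proof.
move=> hc; rewrite -lee_fin -conj_fin.
by apply: ge_ereal_sup => _ [x _ <-]; rewrite lee_fin.
Qed.

End ConjVal.

Lemma grad_affine (c : R) v x : has_gradient (fun y => c + dotp v y) x v.
Proof.
move=> e e0; exists 1 => // y _.
have -> : c + dotp v y - (c + dotp v x) - dotp v (y - x) = 0.
  by rewrite dotpBr; ring.
by rewrite normr0 mulr_ge0 ?enorm_ge0 // ltW.
Qed.

Lemma danskin phi (Gp : vec -> vec) :
  standing_assumption phi -> (forall x, has_gradient phi x (Gp x)) ->
  forall z s, Gp z = s -> has_gradient (conjugate phi) s z.
Proof.
move=> [hcv _ hstr hsup] hG z s hzs.
have hcR : convexR phi by move=> x y t ht; exact: hcv.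
have hbd : forall s', exists C : R, forall x, dotp x s' - phi x <= C.
  move=> s'; have [c hc] := supercoercive_lb hcR (hG 0) hsup (enorm s' + 1).
  exists c => x; have := hc x; have := CS x s'; rewrite ler_norml => /andP[_ h2].
  rewrite (mulrC (enorm x)) in h2; have := enorm_ge0 x; nra.
have hmax : forall x, dotp x s - phi x <= dotp z s - phi z.
  move=> x; have := grad_ineq hcR (hG z) x; rewrite hzs dotpBr (dotpC s x) (dotpC s z); lra.
have cs : conjugate phi s = dotp z s - phi z.
  apply/eqP; rewrite eq_le; apply/andP; split.
    by apply: conj_le; [exact: hbd | exact: hmax].
  exact: conj_ge (hbd s) z.
pose D x := phi x + ((dotp s z - phi z) + dotp (- s) x).
have hD0 : forall x, 0 <= D x.
  move=> x; have := hmax x; rewrite /D dotpNl (dotpC x s) (dotpC z s); lra.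
have hDz : D z = 0 by rewrite /D dotpNl; ring.
have hDc : forall x y (t : R), 0 <= t <= 1 ->
    D (t *: x + (1 - t) *: y) <= t * D x + (1 - t) * D y.
  move=> x y t ht; have := hcv x y t ht; rewrite /D !dotpDr !dotpZr; lra.
have hDs : forall x y (t : R), x != y -> 0 < t < 1 ->
    D (t *: x + (1 - t) *: y) < t * D x + (1 - t) * D y.
  move=> x y t xy ht; have := hstr x y t xy ht; rewrite /D !dotpDr !dotpZr; lra.
have hDr : rcont D.
  apply: (@grad_rcont _ _ D (fun x => Gp x + - s)) => x.
  exact: grad_add (hG x) (grad_affine _ _ _).
move=> e e0.
have [del del0 hdel] : exists2 del : R, 0 < del & forall x, e < enorm (x - z) ->
    enorm (x - z) * del <= D x.
  have [[y0 hy0]|hne] := pselect (exists y, enorm (y - z) = e).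
    have bnd : forall y, enorm (y - z) = e -> enorm y <= e + enorm z.
      by move=> y <-; have := enormD (y - z) z; rewrite subrK.
    have [c [hcK hc]] := min_on (K := [set y | enorm (y - z) = e]) (g := D)
      (ex_intro _ y0 hy0) (closed_sphereE (c := z) (r := e)) (ex_intro _ _ bnd) hDr.
    + have Dc0 : 0 < D c.
        rewrite lt_neqAle hD0 andbT; apply/eqP => Dc.
        have cz : c != z.
          by apply/eqP => cz; move: hcK; rewrite /= cz subrr enorm0 => /eqP; rewrite eq_sym gt_eqF.
        have h12 : 0 < (1/2 : R) < 1 by apply/andP; split; lra.
        have := hDs c z (1/2) cz h12.
        rewrite -Dc hDz; have := hD0 ((1/2) *: c + (1 - 1/2) *: z); lra.
      exists (D c / e); first by rewrite divr_gt0.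
      move=> x hx; set rho := enorm (x - z).
      have rho0 : 0 < rho by apply: lt_trans hx.
      set t := e / rho.
      have t0 : 0 < t by rewrite divr_gt0.
      have t1 : t < 1 by rewrite ltr_pdivrMr // mul1r.
      have hy : enorm ((t *: x + (1 - t) *: z) - z) = e.
        have -> : (t *: x + (1 - t) *: z) - z = t *: (x - z).
          by apply/rowP => i; rewrite !mxE; ring.
        by rewrite enormZ gtr0_norm // /t divfK // gt_eqF.
      have h1 := hc _ hy.
      have := hDc x z t; rewrite ltW //= ltW // => /(_ isT); rewrite hDz mulr0 addr0 => h2.
      have : D c <= t * D x by apply: le_trans h2.
      rewrite /t mulrAC ler_pdivlMr // => h3.
      by rewrite mulrA ler_pdivrMr //; lra.
  exists 1 => // x hx; exfalso; apply: hne.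
  set rho := enorm (x - z).
  have rho0 : 0 < rho by apply: lt_trans hx.
  exists ((e / rho) *: x + (1 - e / rho) *: z).
  have -> : ((e / rho) *: x + (1 - e / rho) *: z) - z = (e / rho) *: (x - z).
    by apply/rowP => i; rewrite !mxE; ring.
  by rewrite enormZ gtr0_norm ?divr_gt0 // divfK // gt_eqF.
exists del => // s' hs'.
set Dl := s' - s.
have low : dotp z s' - phi z <= conjugate phi s' by apply: conj_ge; exact: hbd.
have up : conjugate phi s' <= conjugate phi s + dotp z Dl + e * enorm Dl.
  apply: conj_le; first exact: hbd.
  move=> x; rewrite cs.
  have eq1 : dotp x s' - phi x - (dotp z s - phi z + dotp z Dl) =
     - D x + dotp (x - z) Dl.
    by rewrite /D /Dl !dotpBl !dotpBr dotpNl (dotpC s x) (dotpC s z); ring.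
  have : - D x + dotp (x - z) Dl <= e * enorm Dl.
    have := CS (x - z) Dl; rewrite ler_norml => /andP[_ hcs].
    have Dl0 := enorm_ge0 Dl.
    have [hx|hx] := leP (enorm (x - z)) e.
      have := hD0 x; have : enorm (x - z) * enorm Dl <= e * enorm Dl by rewrite ler_wpM2r.
      lra.
    have := hdel x hx.
    have : enorm (x - z) * enorm Dl <= enorm (x - z) * del.
      by rewrite ler_wpM2l ?enorm_ge0 // ltW.
    have : 0 <= e * enorm Dl by rewrite mulr_ge0 // ltW.
    lra.
  lra.
have hlow' : 0 <= conjugate phi s' - conjugate phi s - dotp z Dl.
  by rewrite cs /Dl dotpBr; lra.
rewrite ler_norml; apply/andP; split; last by lra.
have : 0 <= e * enorm Dl by rewrite mulr_ge0 ?enorm_ge0 // ltW.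
lra.
Qed.

End Conj.

End M4.
Import M4.

Module M5.
Import Order.TTheory GRing.Theory Num.Theory Num.Def.
Set Implicit Arguments. Unset Strict Implicit. Unset Printing Implicit Defensive.
Local Open Scope classical_set_scope.
Local Open Scope ring_scope.

Section Generic.
Variables (R : realType) (n : nat).
Notation vec := 'rV[R]_n.
Implicit Types (x y z w : vec) (g : vec -> R).

Definition Einf (p1 p2 : vec -> R) (x : vec) : \bar R :=
  ereal_inf [set (p1 y)%:E + (p2 (x - y))%:E | y in setT].

Lemma lsc_rcont g : rcont g -> lsc (fun x => (g x)%:E).
Proof.
move=> hg x t; rewrite lte_fin => ht.
have ht' : 0 < g x - t by rewrite subr_gt0.
have [d d0 hd] := hg x (g x - t) ht'.
exists d => // y hy; rewrite lte_fin; have := hd y hy; rewrite ltr_norml.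
lra.
Qed.

Lemma proper_real g : proper_fun (fun x => (g x)%:E).
Proof. by split => [x //|]; exists 0. Qed.

Lemma limiting_grad g (G : vec -> vec) : (forall x, has_gradient g x (G x)) ->
  vcontinuous G -> forall xb vb, limiting_subgrad (fun x => (g x)%:E) xb vb ->
  vb = G xb.
Proof.
move=> hg hc xb vb [_ [xs [vs [hf hcv]]]].
have hk : forall k, vs k = G (xs k).
  move=> k; have [_ hfr] := hf k; apply: (grad_unique (hg (xs k))) => e e0.
  have [d d0 hd] := hfr e e0; exists d => // y hy.
  by have := hd y hy; rewrite -EFinD lee_fin addrA.
suff H : forall e : R, 0 < e -> enorm (vb - G xb) <= 2 * e.
  apply/eqP; rewrite -subr_eq0; apply/eqP; apply: enorm_eq0.
  apply/eqP; rewrite eq_le enorm_ge0 andbT.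
  rewrite leNgt; apply/negP => hpos.
  have := H (enorm (vb - G xb) / 4) (divr_gt0 hpos (ltr0n _ 4)); lra.
move=> e e0; have [d d0 hd] := hc xb e e0.
have md : 0 < Num.min e d by rewrite lt_min e0 d0.
have [N hN] := hcv (Num.min e d) md.
have [h1 h2 _ _] := hN N (leqnn N).
have h3 := hd (xs N) (lt_le_trans h1 (min_le_r _ _)).
have h4 := lt_le_trans h2 (min_le_l _ _).
have -> : vb - G xb = (G (xs N) - G xb) - (vs N - vb).
  by rewrite hk; apply/rowP => i; rewrite !mxE; ring.
apply: le_trans (enormD _ _) _; rewrite enormN; lra.
Qed.


Section InfConv.
Variables (p1 p2 : vec -> R) (P1 P2 : vec -> vec).
Hypotheses (hp1 : forall x, has_gradient p1 x (P1 x))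
  (hp2 : forall x, has_gradient p2 x (P2 x))
  (cp1 : convexR p1) (cp2 : convexR p2).
Hypothesis att : forall x, exists u, forall y, p1 u + p2 (x - u) <= p1 y + p2 (x - y).

Definition uF := projT1 (choice att).
Lemma uF_min x y : p1 (uF x) + p2 (x - uF x) <= p1 y + p2 (x - y).
Proof. exact: (projT2 (choice att) x y). Qed.
Definition Fr x := p1 (uF x) + p2 (x - uF x).
Definition GF x := P1 (uF x).

Lemma Fr_le x y : Fr x <= p1 y + p2 (x - y).
Proof. exact: uF_min. Qed.

Lemma Einf_eq x : Einf p1 p2 x = (Fr x)%:E.
Proof.
apply/eqP; rewrite eq_le; apply/andP; split.
  by apply: ereal_inf_lbound; exists (uF x).
by apply: le_ereal_inf_tmp => _ [y _ <-]; rewrite -EFinD lee_fin Fr_le.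
Qed.

Lemma opt x : P1 (uF x) = P2 (x - uF x).
Proof.
set u := uF x.
have hg := grad_add (@hp1 u) (grad_comp_sub (c := x) (@hp2 (x - u))).
have := grad_unique (v := 0) hg.
move=> H; apply/eqP; rewrite -subr_eq0; apply/eqP; rewrite -H //.
move=> e e0; exists 1 => // y _; rewrite dotp0l addr0.
have := uF_min x y; rewrite -/u.
have : 0 <= e * enorm (y - u) by rewrite mulr_ge0 ?enorm_ge0 // ltW.
lra.
Qed.

Lemma Fr_sub x w : Fr x + dotp (GF x) (w - x) <= Fr w.
Proof.
set u := uF x; set u' := uF w.
have h1 := grad_ineq cp1 (@hp1 u) u'.
have h2 := grad_ineq cp2 (@hp2 (x - u)) (w - u').
rewrite -opt -/u in h2.
have e : dotp (GF x) (w - x) = dotp (P1 u) (u' - u) + dotp (P1 u) (w - u' - (x - u)).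
  by rewrite -dotpDr /GF -/u; congr dotp; apply/rowP => i; rewrite !mxE; ring.
rewrite /Fr -/u -/u' e; lra.
Qed.

Lemma Fr_grad x : has_gradient Fr x (GF x).
Proof.
move=> e e0; set u := uF x.
have [d d0 hd] := @hp1 u e e0; exists d => // y hy.
have hup : Fr y <= p1 (u + (y - x)) + p2 (x - u).
  have := Fr_le y (u + (y - x)).
  by have -> : y - (u + (y - x)) = x - u by apply/rowP => i; rewrite !mxE; ring.
have hd' := hd (u + (y - x)).
have ee : u + (y - x) - u = y - x by apply/rowP => i; rewrite !mxE; ring.
rewrite ee in hd'; have {hd'} := hd' hy.
rewrite ler_norml => /andP[_ h3].
have h4 := Fr_sub x y.
rewrite ler_norml; apply/andP; split.
  have : 0 <= e * enorm (y - x) by rewrite mulr_ge0 ?enorm_ge0 // ltW.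
  lra.
by move: hup h3 h4; rewrite /Fr /GF -/u; lra.
Qed.

Lemma GF_cont : vcontinuous GF.
Proof.
move=> x e e0.
have e4 : 0 < e / 4 by rewrite divr_gt0.
have [d d0 hd] := Fr_grad x e4.
exists (d / 2); first by rewrite divr_gt0.
move=> y hy.
set D := GF y - GF x.
have [D0|Dn] := eqVneq D 0.
  by rewrite -/D D0 enorm0.
have nD : 0 < enorm D.
  rewrite lt_neqAle enorm_ge0 andbT; apply/eqP => h; move/eqP: Dn; apply.
  exact: enorm_eq0.
set t := d / 4; have t0 : 0 < t by rewrite divr_gt0.
set ev := (enorm D)^-1 *: D.
have enev : enorm ev = 1 by rewrite enormZ gtr0_norm ?invr_gt0 // mulVf // gt_eqF.
have Dev : dotp D ev = enorm D.
  rewrite dotpZr -enorm_sq expr2 mulrA mulVf ?mul1r // gt_eqF //.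
set y' := y + t *: ev.
have yx : enorm (y' - x) <= enorm (y - x) + t.
  have -> : y' - x = (y - x) + t *: ev by apply/rowP => i; rewrite !mxE; ring.
  by apply: le_trans (enormD _ _) _; rewrite enormZ gtr0_norm // enev mulr1.
have yx' : enorm (y' - x) < d.
  apply: le_lt_trans yx _; rewrite /t; lra.
have h1 := Fr_sub y y'.
have h3 := Fr_sub x y.
have := hd y' yx'; rewrite ler_norml => /andP[_ h2].
have ey : y' - y = t *: ev by apply/rowP => i; rewrite !mxE; ring.
have ey2 : y' - x = (y - x) + t *: ev by apply/rowP => i; rewrite !mxE; ring.
rewrite ey dotpZr in h1; rewrite ey2 dotpDr dotpZr in h2.
have h5 : t * dotp D ev <= e / 4 * enorm (y' - x).
  rewrite /D dotpBl; move: h1 h2 h3; rewrite ey2; lra.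
rewrite Dev in h5.
have h6 : e / 4 * enorm (y' - x) <= e / 4 * (d / 2 + d / 4).
  rewrite ler_wpM2l ?(ltW e4) //; apply: le_trans yx _; rewrite /t; lra.
have : t * enorm D <= t * (3 * e / 4).
  apply: le_trans h5 (le_trans h6 _); rewrite /t; lra.
rewrite ler_pM2l // -/D; lra.
Qed.

End InfConv.

End Generic.

End M5.
Import M5.

Module M6.
Unset Implicit Arguments.
Import Order.TTheory GRing.Theory Num.Theory Num.Def.
Local Open Scope classical_set_scope.
Local Open Scope ring_scope.

Section ConjSub.
Variables (R : realType) (n : nat).
Notation vec := 'rV[R]_n.

Lemma conj_grad_sub (Phi : vec -> R) (S : vec -> vec) :
  (forall x w, Phi x + dotp (S x) (w - x) <= Phi w) ->
  (forall s, exists C : R, forall x, dotp x s - Phi x <= C) ->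
  forall y w, has_gradient (conjugate Phi) y w ->
  forall z, Phi w + dotp y (z - w) <= Phi z.
Proof.
move=> hS hb y w hw z.
have cvx : convexR (conjugate Phi).
  move=> y1 y2 t /andP[t0 t1].
  apply: conj_le; first exact: hb.
  move=> x; rewrite dotpDr !dotpZr.
  have h1 := conj_ge (hb y1) x; have h2 := conj_ge (hb y2) x.
  have t1' : 0 <= 1 - t by rewrite subr_ge0.
  have := ler_wpM2l t0 h1; have := ler_wpM2l t1' h2.
  lra.
set s := S w.
have cs : conjugate Phi s = dotp w s - Phi w.
  apply/eqP; rewrite eq_le; apply/andP; split; last exact: conj_ge (hb s) w.
  apply: conj_le; first exact: hb.
  move=> x; have := hS w x; rewrite -/s dotpBr (dotpC s x) (dotpC s w); lra.
have := grad_ineq cvx hw s; rewrite cs dotpBr.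
have := conj_ge (hb y) z.
rewrite dotpBr (dotpC w s) (dotpC z y) (dotpC w y); lra.
Qed.

End ConjSub.

Section Main.
Variables (R : realType) (n : nat).
Notation vec := 'rV[R]_n.
Variables (p1 p2 q1 q2 : vec -> R) (P1 P2 Q1 Q2 : vec -> vec).
Hypotheses (hp1 : forall x, has_gradient p1 x (P1 x))
  (hp2 : forall x, has_gradient p2 x (P2 x))
  (hq1 : forall x, has_gradient q1 x (Q1 x))
  (hq2 : forall x, has_gradient q2 x (Q2 x))
  (cp1 : convexR p1) (cp2 : convexR p2) (cq1 : convexR q1) (cq2 : convexR q2).
Hypothesis attp : forall x, exists u, forall y, p1 u + p2 (x - u) <= p1 y + p2 (x - y).
Hypothesis attq : forall x, exists u, forall y, q1 u + q2 (x - u) <= q1 y + q2 (x - y).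
Hypothesis U1 : forall x z, Q1 z = P1 x -> forall y, p1 y <= p1 x + q1 (y - x + z) - q1 z.
Hypothesis U2 : forall x z, Q2 z = P2 x -> forall y, p2 y <= p2 x + q2 (y - x + z) - q2 z.
Hypothesis lb1 : forall M : R, exists c : R, forall x, M * enorm x - c <= q1 x.
Hypothesis lb2 : forall M : R, exists c : R, forall x, M * enorm x - c <= q2 x.

Let F := Fr attp.
Let Phi := Fr attq.
Let G := GF P1 attp.
Let S := GF Q1 attq.

Let Fsub := Fr_sub hp1 hp2 cp1 cp2 attp.
Let Fgrad : forall x, has_gradient F x (G x) := Fr_grad hp1 hp2 cp1 cp2 attp.
Let Gcont : vcontinuous G := GF_cont hp1 hp2 cp1 cp2 attp.
Let Phisub := Fr_sub hq1 hq2 cq1 cq2 attq.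

Let Phibd : forall s, exists C : R, forall x, dotp x s - Phi x <= C.
Proof.
move=> s; have [c1 h1] := lb1 (enorm s + 1); have [c2 h2] := lb2 (enorm s + 1).
exists (c1 + c2) => x.
rewrite /Phi /Fr; set z := uF attq x.
have := h1 z; have := h2 (x - z).
have := enormD z (x - z); rewrite addrC subrK.
have := CS x s; rewrite ler_norml => /andP[_ hcs].
have := enorm_ge0 s; have := enorm_ge0 x; have := enorm_ge0 z; have := enorm_ge0 (x - z).
nra.
Qed.

Lemma main_abstract :
  smooth_rel (fun x => fine (Einf q1 q2 x)) (Einf p1 p2).
Proof.
have EF : Einf p1 p2 = fun x => (F x)%:E.
  by apply: funext => x; rewrite Einf_eq.
have EP : (fun x => fine (Einf q1 q2 x)) = Phi.
  by apply: funext => x; rewrite Einf_eq.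
have EN : (fun x => oppe (Einf p1 p2 x)) = fun x => (- F x)%:E.
  by apply: funext => x; rewrite Einf_eq.
have hsub := @conj_grad_sub R n Phi S Phisub Phibd.
rewrite EP.
split.
- by move=> x; rewrite EF.
- by rewrite EF; exists G; split.
- rewrite EF; split; first exact: proper_real.
  split; first exact: lsc_rcont (grad_rcont Fgrad).
  move=> xb vb hl w hw x.
  have hv := limiting_grad Fgrad Gcont hl; rewrite hv in hw.
  rewrite -EFinD lee_fin.
  have h1 := Fsub xb x; rewrite -/F -/G in h1.
  have h2 := hsub _ _ hw (x - xb + w).
  move: h2; rewrite dotpNl.
  have -> : x - xb + w - w = x - xb by apply/rowP => i; rewrite !mxE; ring.
  lra.
- rewrite EN; split; first exact: proper_real.
  have Fgrad' : forall x, has_gradient (fun y => - F y) x (- G x).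
    by move=> x; apply: grad_opp.
  split; first exact: lsc_rcont (grad_rcont Fgrad').
  move=> xb vb hl w hw x.
  have Gcont' : vcontinuous (fun x => - G x).
    move=> y e e0; have [d d0 hd] := Gcont y e e0; exists d => // y' hy'.
    by rewrite -opprD enormN; exact: hd.
  have hv := limiting_grad Fgrad' Gcont' hl.
  rewrite hv opprK in hw.
  rewrite -EFinD lee_fin.
  set g := G xb.
  set u := uF attp xb.
  have og : P1 u = g by [].
  have og2 : P2 (xb - u) = g by rewrite -og /u (opt hp1 hp2 attp xb).
  have hs := hsub _ _ hw.
  set z1 := uF attq w.
  set z2 := w - z1.
  have Phiw : Phi w = q1 z1 + q2 z2 by [].
  have Q1z : Q1 z1 = g.
    apply/esym; apply: (grad_unique (hq1 z1)) => e e0.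
    exists 1 => // y _.
    have a1 := Fr_le attq (y + z2) y.
    have a2 := hs (y + z2).
    have eqq : y + z2 - y = z2 by apply/rowP => i; rewrite !mxE; ring.
    rewrite eqq in a1; clear eqq.
    have eqq : y + z2 - w = y - z1 by apply/rowP => i; rewrite /z2 !mxE; ring.
    rewrite eqq in a2; clear eqq.
    have : 0 <= e * enorm (y - z1) by rewrite mulr_ge0 ?enorm_ge0 // ltW.
    move: a1 a2; rewrite -/Phi Phiw; lra.
  have Q2z : Q2 z2 = g.
    apply/esym; apply: (grad_unique (hq2 z2)) => e e0.
    exists 1 => // y _.
    have a1 := Fr_le attq (z1 + y) z1.
    have a2 := hs (z1 + y).
    have eqq : z1 + y - z1 = y by apply/rowP => i; rewrite !mxE; ring.
    rewrite eqq in a1; clear eqq.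
    have eqq : z1 + y - w = y - z2 by apply/rowP => i; rewrite /z2 !mxE; ring.
    rewrite eqq in a2; clear eqq.
    have : 0 <= e * enorm (y - z2) by rewrite mulr_ge0 ?enorm_ge0 // ltW.
    move: a1 a2; rewrite -/Phi Phiw; lra.
  have u1 := U1 u z1 (etrans Q1z (esym og)).
  have u2 := U2 (xb - u) z2 (etrans Q2z (esym og2)).
  set X := x - xb + w.
  set zz := uF attq X.
  have PhiX : Phi X = q1 zz + q2 (X - zz) by [].
  set y1 := zz - z1 + u.
  have b1 := Fr_le attp x y1.
  have b2 := u1 y1.
  have b3 := u2 (x - y1).
  have eqq : y1 - u + z1 = zz by apply/rowP => i; rewrite /y1 !mxE; ring.
  rewrite eqq in b2; clear eqq.
  have eqq : x - y1 - (xb - u) + z2 = X - zz.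
    by apply/rowP => i; rewrite /y1 /z2 /X !mxE; ring.
  rewrite eqq in b3.
  have Fxb : F xb = p1 u + p2 (xb - u) by [].
  move: b1 b2 b3; rewrite -/F Fxb -/X PhiX Phiw; lra.
Qed.

End Main.

End M6.
Import M6.

Module M7.
Import Order.TTheory GRing.Theory Num.Theory Num.Def.
Set Implicit Arguments. Unset Strict Implicit. Unset Printing Implicit Defensive.
Local Open Scope classical_set_scope.
Local Open Scope ring_scope.

Section Inst.
Variables (R : realType) (n : nat).
Notation vec := 'rV[R]_n.

Lemma phi_grad (phi : vec -> R) : standing_assumption phi ->
  exists Gp : vec -> vec, forall x, has_gradient phi x (Gp x).
Proof.
move=> [_ hd _ _]; have [Gp hGp] := choice hd; by exists Gp.
Qed.

Lemma fr_eq (f : vec -> \bar R) : (forall x, f x \is a fin_num) ->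
  f = fun x => (fine (f x))%:E.
Proof. by move=> hf; apply: funext => x; rewrite fineK. Qed.

Lemma convexR_fr (f : vec -> \bar R) : (forall x, f x \is a fin_num) ->
  convex_fun f -> convexR (fun x => fine (f x)).
Proof.
move=> hf hc x y t /andP[t0 t1].
have [->|tn0] := eqVneq t 0.
  by rewrite scale0r add0r subr0 scale1r mul0r add0r mul1r.
have [->|tn1] := eqVneq t 1.
  by rewrite scale1r subrr scale0r addr0 mul1r mul0r addr0.
have ht : 0 < t < 1 by rewrite !lt_neqAle t0 t1 eq_sym tn0 tn1.
have := hc x y t ht; rewrite (fr_eq hf) /= -!EFinM -EFinD lee_fin.
done.
Qed.

Lemma scale_lin (a : R) (x y z : vec) :
  a^-1 *: (y - x + z) = a^-1 *: y - a^-1 *: x + a^-1 *: z.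
Proof. by rewrite !scalerDr scalerN. Qed.

Lemma U_lemma (phi : vec -> R) (f : vec -> \bar R) (Gp Gf : vec -> vec) (a : R) :
  0 < a -> standing_assumption phi -> (forall x, has_gradient phi x (Gp x)) ->
  smooth_rel phi f -> (forall x, has_gradient (fun x => fine (f x)) x (Gf x)) ->
  forall x z, Gp (a^-1 *: z) = Gf (a^-1 *: x) -> forall y,
  a * fine (f (a^-1 *: y)) <= a * fine (f (a^-1 *: x)) +
     a * phi (a^-1 *: (y - x + z)) - a * phi (a^-1 *: z).
Proof.
move=> a0 hs hGp [hfin _ _ [_ [_ hwc]]] hGf x z hxz y.
set x' := a^-1 *: x; set z' := a^-1 *: z; set y' := a^-1 *: y.
have hdan := danskin hs hGp hxz.
have hl : limiting_subgrad (fun x => - f x)%E x' (- Gf x').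
  have fn : forall u, (- f u)%E \is a fin_num.
    by move=> u; rewrite fin_numN hfin.
  split; first exact: fn.
  exists (fun=> x'), (fun=> - Gf x'); split.
    move=> k; split; first exact: fn.
    move=> e e0; have [d d0 hd] := hGf x' e e0; exists d => // u hu.
    rewrite (fr_eq hfin) /= -?EFinN -EFinD lee_fin.
    have := hd u hu; rewrite /= ler_norml dotpNl => /andP[_ h1]; lra.
  move=> e e0; exists 0%N => k _; split => //.
  - by rewrite subrr enorm0.
  - by rewrite subrr enorm0.
  - by rewrite subrr normr0.
have := hwc x' (- Gf x') hl z'; rewrite opprK => /(_ hdan y').
rewrite (fr_eq hfin) /= -?EFinN -EFinD lee_fin => H.
rewrite scale_lin -/x' -/y' -/z'.
have : fine (f y') <= fine (f x') + phi (y' - x' + z') - phi z' by lra.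
move=> H2; have := ler_wpM2l (ltW a0) H2; lra.
Qed.

Lemma cancel_a (a M X : R) : 0 < a -> a * (M * (a^-1 * X)) = M * X.
Proof. by move=> a0; field; exact: lt0r_neq0. Qed.

Lemma q_super (phi : vec -> R) (a : R) : 0 < a -> standing_assumption phi ->
  forall M : R, exists r : R, forall x, r <= enorm x -> M * enorm x <= a * phi (a^-1 *: x).
Proof.
move=> a0 [_ _ _ hsup] M; have [r hr] := hsup M.
exists (a * `|r|) => x hx.
have hx' : r <= enorm (a^-1 *: x).
  rewrite enormZ gtr0_norm ?invr_gt0 //; apply: le_trans (ler_norm r) _.
  by rewrite ler_pdivlMl // mulrC.
have := hr _ hx'; rewrite enormZ gtr0_norm ?invr_gt0 // => h.
have := ler_wpM2l (ltW a0) h.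
by rewrite cancel_a.
Qed.

End Inst.

End M7.
Import M7.

Module M8.
Import Order.TTheory GRing.Theory Num.Theory Num.Def.
Set Implicit Arguments. Unset Strict Implicit. Unset Printing Implicit Defensive.
Local Open Scope classical_set_scope.
Local Open Scope ring_scope.

Section Fin.
Variables (R : realType) (n : nat).
Notation vec := 'rV[R]_n.

Lemma scale_super (g : vec -> R) (a : R) : 0 < a ->
  (forall M : R, exists r : R, forall x, r <= enorm x -> M * enorm x <= g x) ->
  forall M : R, exists r : R, forall x, r <= enorm x -> M * enorm x <= a * g (a^-1 *: x).
Proof.
move=> a0 hsup M; have [r hr] := hsup M.
exists (a * `|r|) => x hx.
have hx' : r <= enorm (a^-1 *: x).
  rewrite enormZ gtr0_norm ?invr_gt0 //; apply: le_trans (ler_norm r) _.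
  by rewrite ler_pdivlMl // mulrC.
have := hr _ hx'; rewrite enormZ gtr0_norm ?invr_gt0 // => h.
have := ler_wpM2l (ltW a0) h.
by rewrite cancel_a.
Qed.

Lemma scale_coer (g : vec -> R) (a : R) : 0 < a ->
  (forall M : R, exists r : R, forall x, r <= enorm x -> M <= g x) ->
  forall M : R, exists r : R, forall x, r <= enorm x -> M <= a * g (a^-1 *: x).
Proof.
move=> a0 hc M; have [r hr] := hc (M / a).
exists (a * `|r|) => x hx.
have hx' : r <= enorm (a^-1 *: x).
  rewrite enormZ gtr0_norm ?invr_gt0 //; apply: le_trans (ler_norm r) _.
  by rewrite ler_pdivlMl // mulrC.
by have := hr _ hx'; rewrite ler_pdivrMr // mulrC.
Qed.

Lemma affine_lb (p : vec -> R) (P0 : vec) : convexR p -> has_gradient p 0 P0 ->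
  forall y, p 0 - enorm P0 * enorm y <= p y.
Proof.
move=> hc hg y; have := grad_ineq hc hg y; rewrite subr0.
have := CS P0 y; rewrite ler_norml => /andP[h _]; lra.
Qed.

Lemma att_of (p1 p2 : vec -> R) (P1 P2 : vec -> vec) :
  (forall x, has_gradient p1 x (P1 x)) -> (forall x, has_gradient p2 x (P2 x)) ->
  (forall x, exists r : R, forall y, r <= enorm y ->
     p1 0 + p2 (x - 0) <= p1 y + p2 (x - y)) ->
  forall x, exists u, forall y, p1 u + p2 (x - u) <= p1 y + p2 (x - y).
Proof.
move=> hp1 hp2 hco x.
have hr : rcont (fun y => p1 y + p2 (x - y)).
  apply: (grad_rcont (G := fun y => P1 y + - P2 (x - y))) => y.
  exact: grad_add (hp1 y) (grad_comp_sub (hp2 (x - y))).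
have [r hr'] := hco x.
have [c hc] := attain_coercive hr (ex_intro _ r hr').
by exists c.
Qed.

Lemma tri_low (x y : vec) : enorm y - enorm x <= enorm (x - y).
Proof. have := enormD (y - x) x; rewrite subrK enormB; lra. Qed.

Lemma tri_up (x y : vec) : enorm (x - y) <= enorm x + enorm y.
Proof. by apply: le_trans (enormD _ _) _; rewrite enormN. Qed.

End Fin.

End M8.
Import M8.

Unset Implicit Arguments.
Theorem mainTheorem14 (R : realType) (n : nat)
  (phi1 phi2 : 'rV[R]_n -> R) (f1 f2 : 'rV[R]_n -> \bar R) (a1 a2 : R) :
  standing_assumption phi1 -> standing_assumption phi2 ->
  proper_fun f1 -> lsc f1 -> convex_fun f1 -> smooth_rel phi1 f1 ->
  proper_fun f2 -> lsc f2 -> convex_fun f2 -> smooth_rel phi2 f2 ->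
  0 < a1 -> 0 < a2 ->
  ((bounded_below f1 /\ coercive f2) \/ (bounded_below f2 /\ coercive f1) \/
   supercoercive f1 \/ supercoercive f2) ->
  smooth_rel (ref_infconv a1 a2 phi1 phi2) (infconv (escale a1 f1) (escale a2 f2)).
Proof.
move=> hs1 hs2 _ _ cv1 sm1 _ _ cv2 sm2 a10 a20 hcase.
have [Gp1 hGp1] := phi_grad hs1.
have [Gp2 hGp2] := phi_grad hs2.
have [fin1 [Gf1 [hGf1 _]] _ _] := sm1.
have [fin2 [Gf2 [hGf2 _]] _ _] := sm2.
pose p1 y := a1 * fine (f1 (a1^-1 *: y)).
pose p2 y := a2 * fine (f2 (a2^-1 *: y)).
pose P1 y := Gf1 (a1^-1 *: y).
pose P2 y := Gf2 (a2^-1 *: y).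
pose q1 y := a1 * phi1 (a1^-1 *: y).
pose q2 y := a2 * phi2 (a2^-1 *: y).
pose Q1 y := Gp1 (a1^-1 *: y).
pose Q2 y := Gp2 (a2^-1 *: y).
have hp1 : forall x, has_gradient p1 x (P1 x).
  by move=> x; exact: (grad_scale a10 (hGf1 _)).
have hp2 : forall x, has_gradient p2 x (P2 x).
  by move=> x; exact: (grad_scale a20 (hGf2 _)).
have hq1 : forall x, has_gradient q1 x (Q1 x).
  by move=> x; exact: (grad_scale a10 (hGp1 _)).
have hq2 : forall x, has_gradient q2 x (Q2 x).
  by move=> x; exact: (grad_scale a20 (hGp2 _)).
have cp1 : convexR p1 by exact: (convexR_scale a10 (convexR_fr fin1 cv1)).
have cp2 : convexR p2 by exact: (convexR_scale a20 (convexR_fr fin2 cv2)).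
have cq1 : convexR q1.
  by apply: convexR_scale a10 _; case: hs1 => h _ _ _.
have cq2 : convexR q2.
  by apply: convexR_scale a20 _; case: hs2 => h _ _ _.
have U1 : forall x z, Q1 z = P1 x -> forall y, p1 y <= p1 x + q1 (y - x + z) - q1 z.
  move=> x z hxz y; exact: (U_lemma a10 hs1 hGp1 sm1 hGf1 hxz y).
have U2 : forall x z, Q2 z = P2 x -> forall y, p2 y <= p2 x + q2 (y - x + z) - q2 z.
  move=> x z hxz y; exact: (U_lemma a20 hs2 hGp2 sm2 hGf2 hxz y).
have lb1 := supercoercive_lb cq1 (hq1 0) (q_super a10 hs1).
have lb2 := supercoercive_lb cq2 (hq2 0) (q_super a20 hs2).
have attq : forall x, exists u, forall y, q1 u + q2 (x - u) <= q1 y + q2 (x - y).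
  apply: (att_of hq1 hq2) => x.
  have [c1 h1] := lb1 1; have [c2 h2] := lb2 0.
  exists (q1 0 + q2 (x - 0) + c1 + c2) => y hy.
  have := h1 y; have := h2 (x - y); rewrite mul0r mul1r; lra.
have attp : forall x, exists u, forall y, p1 u + p2 (x - u) <= p1 y + p2 (x - y).
  apply: (att_of hp1 hp2) => x.
  set h0 := p1 0 + p2 (x - 0).
  have al1 := affine_lb cp1 (hp1 0); have al2 := affine_lb cp2 (hp2 0).
  have hx0 := enorm_ge0 x.
  case: hcase => [[[m hm] hc]|[[[m hm] hc]|[hsc|hsc]]].
  - have hc' : forall M : R, exists r : R, forall z, r <= enorm z -> M <= fine (f2 z).
      move=> M; have [r hr] := hc M; exists r => z hz.
      by have := hr z hz; rewrite -(fineK (fin2 z)) lee_fin.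
    have [r hr] := scale_coer a20 hc' ((h0 - a1 * m) / a2 * a2).
    exists (`|r| + enorm x) => y hy.
    have h1 : a1 * m <= p1 y.
      rewrite ler_pM2l //; have := hm (a1^-1 *: y).
      by rewrite -(fineK (fin1 (a1^-1 *: y))) lee_fin.
    have h2 := hr (x - y).
    have : r <= enorm (x - y).
      have := tri_low x y; have := ler_norm r; lra.
    move/h2; rewrite divfK ?gt_eqF // => h3.
    have h3' : h0 - a1 * m <= p2 (x - y) := h3.
    lra.
  - have hc' : forall M : R, exists r : R, forall z, r <= enorm z -> M <= fine (f1 z).
      move=> M; have [r hr] := hc M; exists r => z hz.
      by have := hr z hz; rewrite -(fineK (fin1 z)) lee_fin.
    have [r hr] := scale_coer a10 hc' (h0 - a2 * m).
    exists r => y hy.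
    have h1 : a2 * m <= p2 (x - y).
      rewrite ler_pM2l //; have := hm (a2^-1 *: (x - y)).
      by rewrite -(fineK (fin2 (a2^-1 *: (x - y)))) lee_fin.
    have h3 : h0 - a2 * m <= p1 y := hr y hy.
    lra.
  - have hs' : forall M : R, exists r : R, forall z, r <= enorm z -> M * enorm z <= fine (f1 z).
      move=> M; have [r hr] := hsc M; exists r => z hz.
      by have := hr z hz; rewrite -(fineK (fin1 z)) lee_fin.
    set K := enorm (P2 0).
    have K0 : 0 <= K := enorm_ge0 _.
    have [r hr] := scale_super a10 hs' (K + 1).
    exists (Num.max r (`|h0 - p2 0 + K * enorm x|)) => y.
    rewrite ge_max => /andP[hy1 hy2].
    have h3 : (K + 1) * enorm y <= p1 y := hr y hy1.
    have h4 := al2 (x - y).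
    have h5 := tri_up x y.
    have h6 : h0 - p2 0 + K * enorm x <= enorm y by apply: le_trans (ler_norm _) hy2.
    have : K * enorm (x - y) <= K * (enorm x + enorm y) by rewrite ler_wpM2l.
    rewrite -/K in h4; nra.
  - have hs' : forall M : R, exists r : R, forall z, r <= enorm z -> M * enorm z <= fine (f2 z).
      move=> M; have [r hr] := hsc M; exists r => z hz.
      by have := hr z hz; rewrite -(fineK (fin2 z)) lee_fin.
    set K := enorm (P1 0).
    have K0 : 0 <= K := enorm_ge0 _.
    have [r hr] := scale_super a20 hs' (K + 1).
    exists (Num.max (`|r| + enorm x) (`|h0 - p1 0 + (K + 1) * enorm x|)) => y.
    rewrite ge_max => /andP[hy1 hy2].
    have h7 : r <= enorm (x - y).
      have := tri_low x y; have := ler_norm r; lra.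
    have h3 : (K + 1) * enorm (x - y) <= p2 (x - y) := hr (x - y) h7.
    have h4 := al1 y.
    have h5 := tri_low x y.
    have h6 : h0 - p1 0 + (K + 1) * enorm x <= enorm y by apply: le_trans (ler_norm _) hy2.
    have : (K + 1) * (enorm y - enorm x) <= (K + 1) * enorm (x - y).
      by rewrite ler_wpM2l // addr_ge0.
    rewrite -/K in h4; nra.
have E1 : infconv (escale a1 f1) (escale a2 f2) = Einf p1 p2.
  apply: funext => x; rewrite /infconv /Einf.
  have e1 : escale a1 f1 = fun y => (p1 y)%:E.
    by apply: funext => y; rewrite /escale -(fineK (fin1 (a1^-1 *: y))) -EFinM.
  have e2 : escale a2 f2 = fun y => (p2 y)%:E.
    by apply: funext => y; rewrite /escale -(fineK (fin2 (a2^-1 *: y))) -EFinM.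
  by rewrite e1 e2.
have E2 : ref_infconv a1 a2 phi1 phi2 = fun x => fine (Einf q1 q2 x).
  apply: funext => x; rewrite /ref_infconv /infconv /Einf.
  have e1 : escale a1 (fun z => (phi1 z)%:E) = fun y => (q1 y)%:E.
    by apply: funext => y; rewrite /escale -EFinM.
  have e2 : escale a2 (fun z => (phi2 z)%:E) = fun y => (q2 y)%:E.
    by apply: funext => y; rewrite /escale -EFinM.
  by rewrite e1 e2.
rewrite E1 E2.
exact: (@main_abstract R n p1 p2 q1 q2 P1 P2 Q1 Q2 hp1 hp2 hq1 hq2 cp1 cp2 cq1 cq2 attp attq U1 U2 lb1 lb2).
Qed.
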